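(* Let $(\mathfrak A,\mathfrak A_0)$ be a quasi *-algebra with unit $e$ and let $\omega,\theta\in\mathcal R(\mathfrak A,\mathfrak A_0)$ with $\omega\le\theta$. Then $\theta-\omega\in\mathcal R(\mathfrak A,\mathfrak A_0)$.
   Context: A quasi *-algebra $(\mathfrak A,\mathfrak A_0)$ consists of a complex vector space $\mathfrak A$ and a *-algebra $\mathfrak A_0$ which is a linear subspace of $\mathfrak A$, such that: $\mathfrak A$ carries an involution $a\mapsto a^*$ extending that of $\mathfrak A_0$; $\mathfrak A$ is a bimodule over $\mathfrak A_0$ whose module multiplications extend the multiplication of $\mathfrak A_0$, with $(xa)y=x(ay)$ and $a(xy)=(ax)y$ for all $a\in\mathfrak A$, $x,y\in\mathfrak A_0$; and $(ax)^*=x^*a^*$ for all $a\in\mathfrak A$, $x\in\mathfrak A_0$. A unit is an element $e\in\mathfrak A_0$ with $ae=ea=a$ for all $a\in\mathfrak A$. A linear functional $\omega$ on $\mathfrak A$ is representable if (L.1) $\omega(x^*x)\ge0$ for all $x\in\mathfrak A_0$; (L.2) $\omega(y^*a^*x)=\overline{\omega(x^*ay)}$ for all $x,y\in\mathfrak A_0$, $a\in\mathfrak A$; (L.3) for every $a\in\mathfrak A$ there is $\gamma_a>0$ with $|\omega(a^*x)|\le\gamma_a\,\omega(x^*x)^{1/2}$ for all $x\in\mathfrak A_0$. $\mathcal R(\mathfrak A,\mathfrak A_0)$ is the set of representable functionals. For $\omega\in\mathcal R(\mathfrak A,\mathfrak A_0)$: $N_\omega=\{x\in\mathfrak A_0:\omega(x^*x)=0\}$,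 $\lambda_\omega(x)=x+N_\omega$, and $\mathcal H_\omega$ is the Hilbert space completion of $\mathfrak A_0/N_\omega$ for the inner product $\langle\lambda_\omega(x),\lambda_\omega(y)\rangle=\omega(y^*x)$. For $a\in\mathfrak A$, $T_\omega a$ denotes the unique vector of $\mathcal H_\omega$ with $\langle\lambda_\omega(x),T_\omega a\rangle=\omega(a^*x)$ for all $x\in\mathfrak A_0$ (it exists by (L.3)); $T_\omega:\mathfrak A\to\mathcal H_\omega$ is linear. Put $\Omega^\omega(a,b)=\langle T_\omega a,T_\omega b\rangle$, $a,b\in\mathfrak A$ (equivalently $\langle\pi_\omega(a)\xi_\omega,\pi_\omega(b)\xi_\omega\rangle$ for the GNS representation $\pi_\omega$ with cyclic vector $\xi_\omega=\lambda_\omega(e)$). For $\omega,\theta\in\mathcal R(\mathfrak A,\mathfrak A_0)$ write $\omega\le\theta$ if $\Omega^\omega(a,a)\le\Omega^\theta(a,a)$ for all $a\in\mathfrak A$. *)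

(* Defs.v *)
(* Scalars: an arbitrary numeric closed field C (the paper's
   case is C = complex numbers). *)
From HB Require Import structures.
From mathcomp Require Import all_boot all_order all_algebra.
Set Implicit Arguments. Unset Strict Implicit. Unset Printing Implicit Defensive.
Import Order.TTheory GRing.Theory Num.Theory.
Local Open Scope ring_scope.

Section QSA.
Variable C : numClosedFieldType.

(* A quasi *-algebra (A, A0): A0 is a *-algebra embedded linearly and
   injectively in A by j; star is the involution of A, star0 that of A0
   (compatible via j); mul0 is the product of A0; lm / rm are the left /
   right module multiplications A0 x A -> A and A x A0 -> A. *)
Definition quasi_star_algebra (A A0 : lmodType C) (j : A0 -> A)
  (star : A -> A) (star0 : A0 -> A0) (mul0 : A0 -> A0 -> A0)
  (lm : A0 -> A -> A) (rm : A -> A0 -> A) : Prop :=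
  (forall (k : C) x y, j (k *: x + y) = k *: j x + j y) /\
  injective j /\
  (forall (k : C) x y z, mul0 (k *: x + y) z = k *: mul0 x z + mul0 y z) /\
  (forall (k : C) x y z, mul0 x (k *: y + z) = k *: mul0 x y + mul0 x z) /\
  (forall x y z, mul0 x (mul0 y z) = mul0 (mul0 x y) z) /\
  (forall (k : C) x y, star0 (k *: x + y) = k^* *: star0 x + star0 y) /\
  (forall x, star0 (star0 x) = x) /\
  (forall x y, star0 (mul0 x y) = mul0 (star0 y) (star0 x)) /\
  (forall (k : C) a b, star (k *: a + b) = k^* *: star a + star b) /\
  (forall a, star (star a) = a) /\
  (forall x, star (j x) = j (star0 x)) /\
  (forall (k : C) x y a, lm (k *: x + y) a = k *: lm x a + lm y a) /\
  (forall (k : C) x a b, lm x (k *: a + b) = k *: lm x a + lm x b) /\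
  (forall (k : C) a b x, rm (k *: a + b) x = k *: rm a x + rm b x) /\
  (forall (k : C) a x y, rm a (k *: x + y) = k *: rm a x + rm a y) /\
  (forall x y a, lm (mul0 x y) a = lm x (lm y a)) /\
  (forall a x y, rm a (mul0 x y) = rm (rm a x) y) /\
  (forall x y, lm x (j y) = j (mul0 x y)) /\
  (forall x y, rm (j x) y = j (mul0 x y)) /\
  (forall x a y, rm (lm x a) y = lm x (rm a y)) /\
  (forall a x, star (rm a x) = lm (star0 x) (star a)).

Definition is_unit_qsa (A A0 : lmodType C) (lm : A0 -> A -> A)
  (rm : A -> A0 -> A) (e : A0) : Prop :=
  forall a, lm e a = a /\ rm a e = a.

Definition representable (A A0 : lmodType C) (j : A0 -> A)
  (star : A -> A) (star0 : A0 -> A0) (mul0 : A0 -> A0 -> A0)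
  (lm : A0 -> A -> A) (rm : A -> A0 -> A) (w : A -> C) : Prop :=
  (forall (k : C) a b, w (k *: a + b) = k * w a + w b) /\
  (forall x, 0 <= w (j (mul0 (star0 x) x))) /\
  (forall x y a,
      w (lm (star0 y) (rm (star a) x)) = (w (lm (star0 x) (rm a y)))^*) /\
  (forall a, exists2 g : C, 0 < g &
     forall x, `|w (rm (star a) x)| <= g * sqrtC (w (j (mul0 (star0 x) x)))).

(* complex Hilbert spaces: inner product linear in the first argument *)
Definition inner_product (H : lmodType C) (ip : H -> H -> C) : Prop :=
  (forall (k : C) u v w, ip (k *: u + v) w = k * ip u w + ip v w) /\
  (forall u v, ip v u = (ip u v)^*) /\
  (forall u, 0 <= ip u u) /\
  (forall u, ip u u = 0 -> u = 0).

Definition hnorm (H : lmodType C) (ip : H -> H -> C) (u : H) : C :=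
  sqrtC (ip u u).

Definition complete_ip (H : lmodType C) (ip : H -> H -> C) : Prop :=
  forall u : nat -> H,
    (forall eps : C, 0 < eps -> exists N, forall m n, (N <= m)%N -> (N <= n)%N ->
        hnorm ip (u m - u n) < eps) ->
    exists v, forall eps : C, 0 < eps -> exists N, forall n, (N <= n)%N ->
        hnorm ip (u n - v) < eps.

(* (H, ip, lam, T) is a GNS realization of w:  H is a Hilbert space,
   lam : A0 -> H linear with dense range and <lam x, lam y> = w(y^* x)
   (so H is (isometric to) the completion of A0/N_w with
   lam x = lambda_w(x)), and T a = T_w a is the vector with
   <lam x, T a> = w(a^* x) for all x in A0. *)
Definition GNS_realization (A A0 : lmodType C) (j : A0 -> A)
  (star : A -> A) (star0 : A0 -> A0) (mul0 : A0 -> A0 -> A0)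
  (rm : A -> A0 -> A) (w : A -> C)
  (H : lmodType C) (ip : H -> H -> C) (lam : A0 -> H) (T : A -> H) : Prop :=
  inner_product ip /\ complete_ip ip /\
  (forall (k : C) x y, lam (k *: x + y) = k *: lam x + lam y) /\
  (forall x y, ip (lam x) (lam y) = w (j (mul0 (star0 y) x))) /\
  (forall (v : H) (eps : C), 0 < eps -> exists x, hnorm ip (v - lam x) < eps) /\
  (forall x a, ip (lam x) (T a) = w (rm (star a) x)).

(* w <= t  iff  Omega^w(a,a) = <T_w a, T_w a> <= <T_t a, T_t a> = Omega^t(a,a)
   for all a, computed in GNS realizations of w and t. *)
Definition Omega_le (A A0 : lmodType C) (j : A0 -> A)
  (star : A -> A) (star0 : A0 -> A0) (mul0 : A0 -> A0 -> A0)
  (rm : A -> A0 -> A) (w t : A -> C) : Prop :=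
  exists (H1 : lmodType C) (ip1 : H1 -> H1 -> C) (lam1 : A0 -> H1) (T1 : A -> H1)
         (H2 : lmodType C) (ip2 : H2 -> H2 -> C) (lam2 : A0 -> H2) (T2 : A -> H2),
    GNS_realization j star star0 mul0 rm w ip1 lam1 T1 /\
    GNS_realization j star star0 mul0 rm t ip2 lam2 T2 /\
    forall a, ip1 (T1 a) (T1 a) <= ip2 (T2 a) (T2 a).

End QSA.

(* Main.v *)
Require Import Defs.
From HB Require Import structures.
From mathcomp Require Import all_boot all_order all_algebra.
From mathcomp Require Import ring.
Import Order.TTheory GRing.Theory Num.Theory.
Local Open Scope ring_scope.

Lemma cs_aux (C : numClosedFieldType) (p q z : C) : 0 <= q ->
  (forall s, 0 <= p + s * z^* + s^* * z + s * s^* * q) ->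
  `|z| <= sqrtC (q+1) * sqrtC p.
Proof.
move=> q0 H.
have q1 : 0 < q + 1 := ltr_wpDl q0 ltr01.
have p0 : 0 <= p by have := H 0; rewrite rmorph0 !mul0r !addr0.
set r := (q+1)^-1.
have r0 : 0 < r by rewrite invr_gt0.
have rc : r^* = r by rewrite geC0_conj // ltW.
have rq : r * (q+1) = 1 by apply: mulVf; rewrite gt_eqF.
have cs : (-(z*r))^* = -(z^* * r) by rewrite rmorphN rmorphM /= rc.
have := H (-(z*r)); rewrite cs.
have rq' : r * q = 1 - r by rewrite -rq; ring.
have E : p + - (z * r) * z^* + - (z^* * r) * z + - (z * r) * - (z^* * r) * q
   = p - (z * z^*)*r - (z*z^*)*r^+2.
{ transitivity (p - 2*(z*z^*)*r + (z*z^*)*r*(r*q)); first by ring.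
  rewrite rq'; ring. }
rewrite E => h.
have n0 : 0 <= z * z^* := mul_conjC_ge0 z.
have h2 : z * z^* * r <= p.
{ have h0 : 0 <= z * z^* * r^+2 by apply: mulr_ge0 => //; apply: exprn_ge0; apply: ltW.
  rewrite -subr_ge0; apply: le_trans h0 _; by rewrite subr_ge0 in h. }
have h3 : z * z^* <= p * (q+1).
{ have := ler_wpM2r (ltW q1) h2. by rewrite -(mulrA (z*z^*)) rq mulr1. }
rewrite normC_def -sqrtCM ?nnegrE ?(ltW q1) // ler_sqrtC ?nnegrE ?n0 ?mulr_ge0 ?(ltW q1) //.
by rewrite [X in _ <= X]mulrC.
Qed.

Section IP.
Context {C : numClosedFieldType} {H : lmodType C} {ip : H -> H -> C}.
Hypothesis hip : inner_product ip.

Lemma ipDl k u v w : ip (k *: u + v) w = k * ip u w + ip v w.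
Proof. by case: hip. Qed.

Lemma ipS u v : ip v u = (ip u v)^*.
Proof. by case: hip => _ []. Qed.

Lemma ipDr u k v w : ip u (k *: v + w) = k^* * ip u v + ip u w.
Proof.
rewrite ipS ipDl rmorphD rmorphM /=.
by rewrite -(ipS v u) -(ipS w u).
Qed.

Lemma ipBr u v w : ip u (v - w) = ip u v - ip u w.
Proof.
have -> : v - w = (-1) *: w + v by rewrite scaleN1r addrC.
by rewrite ipDr rmorphN1 mulN1r addrC.
Qed.

Lemma ipBl u v w : ip (v - w) u = ip v u - ip w u.
Proof.
have -> : v - w = (-1) *: w + v by rewrite scaleN1r addrC.
by rewrite ipDl mulN1r addrC.
Qed.

Lemma ip_expand s U V :
  ip (s *: U + V) (s *: U + V)
  = ip V V + s * (ip V U)^* + s^* * ip V U + s * s^* * ip U U.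
Proof.
rewrite ipDl !ipDr -(ipS V U).
ring.
Qed.

End IP.

Lemma gns_zero {C : numClosedFieldType} {A A0 : lmodType C}
  {j : A0 -> A} {star : A -> A} {star0 : A0 -> A0} {mul0 : A0 -> A0 -> A0}
  {rm : A -> A0 -> A} {w : A -> C}
  {H : lmodType C} {ip : H -> H -> C} {lam : A0 -> H} {T : A -> H} :
  GNS_realization j star star0 mul0 rm w ip lam T ->
  forall v, (forall x, ip (lam x) v = 0) -> v = 0.
Proof.
case=> hip [_ [_ [_ [dens _]]]] v orth.
have [_ [_ [pos def]]] := hip.
apply: def.
set c := ip v v.
have c0 : 0 <= c := pos v.
have key : forall eps, 0 < eps -> c < eps ^+ 2.
{ move=> eps e0; have [x hx] := dens v eps e0.
  have E : ip (v - lam x) (v - lam x) = c + ip (lam x) (lam x).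
  { rewrite (ipBl hip) !(ipBr hip) (ipS hip (lam x) v) orth rmorph0 /c; ring. }
  move: hx; rewrite /hnorm E.
  have d0 : 0 <= c + ip (lam x) (lam x) by apply: addr_ge0.
  rewrite -{1}(sqrCK (ltW e0)) ltr_sqrtC ?nnegrE ?d0 ?exprn_ge0 ?(ltW e0) // => h.
  apply: le_lt_trans h; by rewrite lerDl. }
have [//|cn] := eqVneq c 0.
have cp : 0 < c by rewrite lt_def cn c0.
have := key (sqrtC c); rewrite sqrtC_gt0 cp sqrtCK => /(_ isT).
by rewrite ltxx.
Qed.

Section Main.
Context {C : numClosedFieldType} {A A0 : lmodType C}
  {j : A0 -> A} {star : A -> A} {star0 : A0 -> A0} {mul0 : A0 -> A0 -> A0}
  {lm : A0 -> A -> A} {rm : A -> A0 -> A} {w : A -> C}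
  {H : lmodType C} {ip : H -> H -> C} {lam : A0 -> H} {T : A -> H}.
Hypothesis hq : quasi_star_algebra j star star0 mul0 lm rm.
Hypothesis wlin : forall (k : C) a b, w (k *: a + b) = k * w a + w b.
Hypothesis G : GNS_realization j star star0 mul0 rm w ip lam T.

Lemma gns_Tj x : T (j x) = lam x.
Proof.
case: hq => hjlin [hjinj [hm1 [hm2 [hmA [hs0lin [hs0inv [hs0m [hslin [hsinv [hsj [hlm1 [hlm2 [hrm1 [hrm2 [hlmM [hrmM [hlmj [hrmj [hlr hsrm]]]]]]]]]]]]]]]]]]].
have G' := G; case: G' => hip [_ [_ [lamip [_ Tip]]]].
apply/eqP; rewrite -subr_eq0; apply/eqP.
apply: (gns_zero G) => y.
by rewrite (ipBr hip) Tip lamip hsj hrmj subrr.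
Qed.

Lemma gns_Tlin k a b : T (k *: a + b) = k *: T a + T b.
Proof.
case: hq => hjlin [hjinj [hm1 [hm2 [hmA [hs0lin [hs0inv [hs0m [hslin [hsinv [hsj [hlm1 [hlm2 [hrm1 [hrm2 [hlmM [hrmM [hlmj [hrmj [hlr hsrm]]]]]]]]]]]]]]]]]]].
have G' := G; case: G' => hip [_ [_ [lamip [_ Tip]]]].
apply/eqP; rewrite -subr_eq0; apply/eqP.
apply: (gns_zero G) => y.
by rewrite (ipBr hip) (ipDr hip) !Tip hslin hrm1 wlin subrr.
Qed.

End Main.

Theorem mainTheorem2 (C : numClosedFieldType) (A A0 : lmodType C)
  (j : A0 -> A) (star : A -> A) (star0 : A0 -> A0) (mul0 : A0 -> A0 -> A0)
  (lm : A0 -> A -> A) (rm : A -> A0 -> A) (e : A0) (w t : A -> C) :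
  quasi_star_algebra j star star0 mul0 lm rm ->
  is_unit_qsa lm rm e ->
  representable j star star0 mul0 lm rm w ->
  representable j star star0 mul0 lm rm t ->
  Omega_le j star star0 mul0 rm w t ->
  representable j star star0 mul0 lm rm (fun a => t a - w a).
Proof.
move=> hq _ [wlin [wpos [wsym wbd]]] [tlin [tpos [tsym tbd]]]
  [H1 [ip1 [lam1 [T1 [H2 [ip2 [lam2 [T2 [G1 [G2 Hle]]]]]]]]]].
have G1' := G1; case: G1' => hip1 [_ [_ [lamip1 [_ Tip1]]]].
have G2' := G2; case: G2' => hip2 [_ [_ [lamip2 [_ Tip2]]]].
have Tj1 := gns_Tj hq G1; have Tj2 := gns_Tj hq G2.
have Tl1 := gns_Tlin hq wlin G1; have Tl2 := gns_Tlin hq tlin G2.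
split; [|split; [|split]].
- by move=> k a b; rewrite tlin wlin; ring.
- move=> x; have := Hle (j x); rewrite Tj1 Tj2 lamip1 lamip2.
  by rewrite subr_ge0.
- by move=> x y a; rewrite tsym wsym rmorphB.
- move=> a.
  set q := ip2 (T2 a) (T2 a) - ip1 (T1 a) (T1 a).
  have q0 : 0 <= q by rewrite subr_ge0.
  exists (sqrtC (q + 1)); first by rewrite sqrtC_gt0 (ltr_wpDl q0 ltr01).
  move=> x.
  rewrite -(Tip1 x a) -(Tip2 x a) -(lamip1 x x) -(lamip2 x x) -(Tj1 x) -(Tj2 x).
  apply: cs_aux q0 _ => s.
  have := Hle (s *: a + j x); rewrite Tl1 Tl2 (ip_expand hip1) (ip_expand hip2).
  rewrite -subr_ge0 /q rmorphB /=.
  move=> h; apply: le_trans h _; rewrite le_eqVlt; apply/orP; left; apply/eqP.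
  ring.
Qed.
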